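(* For all $n\ge2$, $B(n)=a(n-2)+2$.
   Context: $\mathbb{N}=\{0,1,2,\dots\}$. Quet's sequence $A:\mathbb{N}\to\mathbb{N}$ is defined by $A(0)=0$, $A(1)=1$, and for $n\ge1$, $A(n+1)$ is the least natural number such that $A(n+1)\notin\{A(0),\dots,A(n)\}$ and $\sum_{0\le i\le n+1}A(i)\equiv 0 \pmod{n}$. Define $B(0)=0$, $B(1)=1$, and $B(n)=\frac{1}{n-1}\sum_{0\le i\le n}A(i)$ for $n\ge2$ (an integer by the defining congruence); first values $B=0,1,3,3,4,4,5,5,6,7,7,\dots$. Hofstadter's ''married'' sequences $a,b:\mathbb{N}\to\mathbb{N}$ are defined by $a(0)=1$, $b(0)=0$ and, for $n\ge1$, $b(n)=n-a(b(n-1))$ and $a(n)=n-b(a(n-1))$ (computing $b(n)$ before $a(n)$ at each step); first values $a=1,1,2,2,3,3,4,5,5,6,6,\dots$. *)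

(* Defs.v *)
From mathcomp Require Import all_boot.
Set Implicit Arguments. Unset Strict Implicit. Unset Printing Implicit Defensive.

(* Given s = [:: A 0; ...; A m] (m >= 1), the value A (m+1) is the least
   natural number x with x \notin s and (sumn s + x) = 0 mod m.
   The search range [0, (m+2)^2) is sufficient: the admissible residue class
   r mod m (r < m) contains the m+2 numbers r, r+m, ..., r+(m+1)m, all
   < m(m+2) <= (m+2)^2, and at most m+1 of them occur in s.  Hence the head of
   the filtered list below is exactly the least admissible number. *)
Definition quet_next (m : nat) (s : seq nat) : nat :=
  head 0 [seq x <- iota 0 ((m.+2) * (m.+2)) |
           (x \notin s) && ((sumn s + x) %% m == 0)].

Fixpoint quet_upto (n : nat) : seq nat :=
  match n with
  | 0 => [:: 0]
  | 1 => [:: 0; 1]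
  | (k.+1 as m).+1 => let s := quet_upto m in rcons s (quet_next m s)
  end.

Definition quetA (n : nat) : nat := nth 0 (quet_upto n) n.

Definition quetB (n : nat) : nat :=
  if n < 2 then n else (\sum_(0 <= i < n.+1) quetA i) %/ (n - 1).

Fixpoint hof_upto (n : nat) : seq nat * seq nat :=
  match n with
  | 0 => ([:: 1], [:: 0])
  | m.+1 =>
      let (la, lb) := hof_upto m in
      let bn := m.+1 - nth 0 la (nth 0 lb m) in
      let lb' := rcons lb bn in
      let an := m.+1 - nth 0 lb' (nth 0 la m) in
      (rcons la an, lb')
  end.

Definition hof_a (n : nat) : nat := nth 0 (hof_upto n).1 n.
Definition hof_b (n : nat) : nat := nth 0 (hof_upto n).2 n.

(* Main.v *)
Require Import Defs.
From mathcomp Require Import all_boot.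
From mathcomp Require Import zify.

Definition step (f : nat -> nat) (n : nat) : bool :=
  (f n == f n.-1) ||
  has (fun j => (f j.+1 == (f j).+1) && (f n == f j + j + 2)) (iota 0 n).

Lemma rule_uniq (f g : nat -> nat) n0 :
  (forall i, i <= n0 -> f i = g i) ->
  (forall n, n0 <= n -> f n.+1 = f n + step f n) ->
  (forall n, n0 <= n -> g n.+1 = g n + step g n) ->
  forall n, f n = g n.
Proof.
move=> H0 Hf Hg.
suff H : forall n i, i <= n -> f i = g i by move=> n; exact: (H n).
elim=> [|n IH] i.
  by rewrite leqn0 => /eqP ->; apply: H0.
rewrite leq_eqVlt => /orP [/eqP ->|]; last exact: IH.
case: (leqP n.+1 n0) => [le|lt]; first exact: H0.
rewrite Hf ?Hg // ?IH //.
congr (_ + _).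
rewrite /step; congr (_ || _); first by rewrite !IH // leq_pred.
apply: eq_in_has => j; rewrite mem_iota add0n => /andP [_ Hj].
by rewrite !IH // ltnW.
Qed.

Lemma hof_upto_S n : hof_upto n.+1 =
  (rcons (hof_upto n).1 (n.+1 - nth 0 (rcons (hof_upto n).2
        (n.+1 - nth 0 (hof_upto n).1 (nth 0 (hof_upto n).2 n))) (nth 0 (hof_upto n).1 n)),
   rcons (hof_upto n).2 (n.+1 - nth 0 (hof_upto n).1 (nth 0 (hof_upto n).2 n))).
Proof. by rewrite /=; case: (hof_upto n). Qed.

Lemma hof_size n : size (hof_upto n).1 = n.+1 /\ size (hof_upto n).2 = n.+1.
Proof.
elim: n => [|n [IH1 IH2]]; first by [].
by rewrite hof_upto_S /= !size_rcons IH1 IH2.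
Qed.

Lemma hof_prefix n i : i <= n ->
  nth 0 (hof_upto n).1 i = hof_a i /\ nth 0 (hof_upto n).2 i = hof_b i.
Proof.
elim: n => [|n IH]; first by rewrite leqn0 => /eqP ->.
rewrite leq_eqVlt => /orP [/eqP ->|Hi]; first by [].
have [H1 H2] := IH Hi.
have [S1 S2] := hof_size n.
by rewrite hof_upto_S /= !nth_rcons S1 S2 Hi.
Qed.

Lemma hofb_raw n : hof_b n.+1 = n.+1 - nth 0 (hof_upto n).1 (hof_b n).
Proof.
have [S1 S2] := hof_size n.
rewrite /hof_b hof_upto_S /= nth_rcons S2 ltnn eqxx.
by have [_ ->] := hof_prefix n n (leqnn n).
Qed.

Lemma hofb_le n : hof_b n <= n.
Proof. by case: n => [|n] //; rewrite hofb_raw leq_subr. Qed.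

Lemma hofb_S n : hof_b n.+1 = n.+1 - hof_a (hof_b n).
Proof. by rewrite hofb_raw; have [-> _] := hof_prefix n (hof_b n) (hofb_le n). Qed.

Lemma hofa_raw n : hof_a n.+1 = n.+1 - nth 0 (hof_upto n.+1).2 (hof_a n).
Proof.
have [S1 S2] := hof_size n.
rewrite /hof_a [in LHS]hof_upto_S /= nth_rcons S1 ltnn eqxx.
have [-> _] := hof_prefix n n (leqnn n).
by case: (hof_upto n).
Qed.

Lemma hofa_le n : hof_a n <= n.+1.
Proof. by case: n => [|n] //; rewrite hofa_raw; lia. Qed.

Lemma hofa_S n : hof_a n.+1 = n.+1 - hof_b (hof_a n).
Proof. by rewrite hofa_raw; have [_ ->] := hof_prefix n.+1 (hof_a n) (hofa_le n). Qed.

Lemma hofa0 : hof_a 0 = 1. Proof. by []. Qed.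
Lemma hofb0 : hof_b 0 = 0. Proof. by []. Qed.

Notation a := hof_a.
Notation b := hof_b.

Definition PB i := (0 < i -> b i < i) /\ (0 < i -> b i.-1 <= b i <= (b i.-1).+1) /\
  i <= b i + a (b i) /\ (b i = 0 \/ (b i).-1 + a (b i).-1 < i).
Definition PA i := 1 <= a i /\ (0 < i -> a i <= i) /\ (0 < i -> a i.-1 <= a i <= (a i.-1).+1) /\
  i <= a i + b (a i) /\ (a i = 1 \/ (a i).-1 + b (a i).-1 < i).

Lemma stepB q : (forall i, i <= q -> PB i /\ PA i) -> PB q.+1.
Proof.
move=> IH.
have [[_ [_ [Gb1 Gb2]]] _] := IH q (leqnn q).
set k := b q in Gb1 Gb2.
have kq : k <= q by apply: hofb_le.
have [_ [Pa1 [_ [Pa3 _]]]] := IH k kq.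
have Pa3' : 0 < k -> a k.-1 <= a k <= (a k.-1).+1 := Pa3.
have hb : b q.+1 = q.+1 - a k by rewrite hofb_S.
have lo : k + a k <= q.+1.
  case: Gb2 => [k0|H].
    by rewrite k0 /= (_ : a 0 = 1) //; lia.
  have kp : 0 < k by case: (k) H Gb1 => //=; lia.
  have := Pa3' kp; lia.
have hi : q.+1 <= k + a k + 1 by lia.
split; first by move=> _; rewrite hb; lia.
split; first by move=> _; rewrite /= hb -/k; lia.
have [E|E] : q.+1 = k + a k \/ q.+1 = k + a k + 1 by lia.
- have -> : b q.+1 = k by rewrite hb; lia.
  split; first by lia.
  case: (posnP k) => [->|kp]; first by left.
  right; have := Pa3' kp; lia.
- have -> : b q.+1 = k.+1 by rewrite hb; lia.
  have kq' : k.+1 <= q by lia.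
  have [_ [_ [Pb3 _]]] := (IH k.+1 kq').2.
  have := Pb3 isT; rewrite /= => H.
  split; first by lia.
  right; rewrite /=; lia.
Qed.

Lemma stepA q : (forall i, i <= q.+1 -> PB i) -> (forall i, i <= q -> PA i) -> PA q.+1.
Proof.
move=> IHB IHA.
have [Pa1 [Pa2 [_ [Ga1 Ga2]]]] := IHA q (leqnn q).
set k := a q in Pa1 Pa2 Ga1 Ga2.
have kp : k <= q.+1.
  case: (posnP q) => [q0|qp]; last by have := Pa2 qp; lia.
  by rewrite /k q0.
have [Pb2 [Pb3 _]] := IHB k kp.
have ha : a q.+1 = q.+1 - b k by rewrite hofa_S.
have lo : k + b k <= q.+1.
  case: Ga2 => [k1|H].
    have := Pb2 (ltac:(lia)); rewrite k1; lia.
  have := Pb3 (ltac:(lia)); lia.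
have hi : q.+1 <= k + b k + 1 by lia.
split; first by rewrite ha; lia.
split; first by move=> _; rewrite ha; lia.
split; first by move=> _; rewrite /= ha -/k; lia.
have [E|E] : q.+1 = k + b k \/ q.+1 = k + b k + 1 by lia.
- have -> : a q.+1 = k by rewrite ha; lia.
  split; first by lia.
  case: (eqVneq k 1) => [->|k1]; first by left.
  right; have := Pb3 (ltac:(lia)); lia.
- have -> : a q.+1 = k.+1 by rewrite ha; lia.
  have kq' : k.+1 <= q.+1 by lia.
  have [_ [Pb3' _]] := IHB k.+1 kq'.
  have := Pb3' isT; rewrite /= => H.
  split; first by lia.
  right; rewrite /=; lia.
Qed.

Lemma hof_inv n : forall i, i <= n -> PB i /\ PA i.
Proof.
elim: n => [|n IH] i.
  rewrite leqn0 => /eqP ->; split.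
    by split; [|split; [|split]] => //; left.
  by split; [|split; [|split; [|split]]] => //; left.
rewrite leq_eqVlt => /orP [/eqP ->|]; last exact: IH.
have HB : PB n.+1 by apply: stepB.
split=> //; apply: stepA; last by move=> j /IH [].
move=> j; rewrite leq_eqVlt => /orP [/eqP ->|]; first by [].
by move=> /IH [].
Qed.

Lemma PBn n : PB n. Proof. exact: (@hof_inv n n (leqnn n)).1. Qed.
Lemma PAn n : PA n. Proof. exact: (@hof_inv n n (leqnn n)).2. Qed.

Lemma a_inc n : a n <= a n.+1 <= (a n).+1.
Proof. by have [_ [_ [H _]]] := PAn n.+1; exact: H. Qed.
Lemma b_inc n : b n <= b n.+1 <= (b n).+1.
Proof. by have [_ [H _]] := PBn n.+1; exact: H. Qed.
Lemma a_ge1 n : 1 <= a n. Proof. by have [H _] := PAn n. Qed.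

Lemma a_mono : {homo a : i j / i <= j}.
Proof. apply: homo_leq => //; [exact: leq_trans | by move=> i; case/andP: (a_inc i)]. Qed.
Lemma b_mono : {homo b : i j / i <= j}.
Proof. apply: homo_leq => //; [exact: leq_trans | by move=> i; case/andP: (b_inc i)]. Qed.

(* b p = least w with p <= w + a w *)
Lemma b_gal p w : p <= w + a w -> (w = 0 \/ w.-1 + a w.-1 < p) -> b p = w.
Proof.
move=> H1 H2.
have [_ [_ [G1 G2]]] := PBn p.
case: (ltngtP (b p) w) => // [lt|gt].
- have h : b p <= w.-1 by lia.
  have := a_mono _ _ h.
  case: H2 => [w0|H2]; first by move: lt; rewrite w0.
  lia.
- have h : w <= (b p).-1 by lia.
  have := a_mono _ _ h.
  case: G2 => [b0|G2]; first by move: gt; rewrite b0.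
  lia.
Qed.

Lemma I1 m : b (m + a m) = m.
Proof.
apply: b_gal => //; case: (posnP m) => [->|mp]; [by left|right].
have := a_inc m.-1; rewrite prednK //; lia.
Qed.

Lemma I2 m : b (m + a m + 1) = m.+1.
Proof.
apply: b_gal => /=; last by right; lia.
have := a_inc m; lia.
Qed.

Lemma b2 : b 2 = 1. Proof. by []. Qed.

Lemma b_flat v : 2 <= v ->
  (b v == b v.-1) = has (fun j => (a j.+1 == (a j).+1) && (v == a j + j + 2)) (iota 0 v).
Proof.
move=> v2; apply/eqP/hasP.
- move=> E.
  set w := b v.
  have w1 : 1 <= w by rewrite /w -b2; exact: b_mono _ _ _.
  set m := w.-1.
  have wm : w = m.+1 by rewrite /m prednK.
  have e1 := I1 m. have e2 := I2 m. have e3 := I1 w. have e4 := I2 w.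
  have L1 : m + a m + 1 <= v.-1.
    rewrite leqNgt; apply/negP => lt.
    have h : v.-1 <= m + a m by lia.
    have := b_mono _ _ h; rewrite -E -/w e1; lia.
  have L2 : v <= w + a w.
    rewrite leqNgt; apply/negP => lt.
    have h : w + a w + 1 <= v by lia.
    have := b_mono _ _ h; rewrite e4 -/w; lia.
  have hinc := a_inc m; rewrite wm in L2.
  exists m.
    rewrite mem_iota add0n; apply/andP; split=> //; lia.
  apply/andP; split; apply/eqP; lia.
- move=> [m _ /andP [/eqP H1 /eqP H2]].
  have := I2 m; have := I1 m.+1.
  rewrite H1 => e1 e2.
  rewrite H2 (_ : (a m + m + 2).-1 = m + a m + 1); last by lia.
  rewrite e2 (_ : a m + m + 2 = m.+1 + (a m).+1) ?e1 //; lia.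
Qed.

Lemma has_range (f : nat -> nat) n N :
  (forall j, f n = f j + j + 2 -> j < N) ->
  (forall j, f n = f j + j + 2 -> j < n) ->
  has (fun j => (f j.+1 == (f j).+1) && (f n == f j + j + 2)) (iota 0 N) =
  has (fun j => (f j.+1 == (f j).+1) && (f n == f j + j + 2)) (iota 0 n).
Proof.
move=> HN Hn; apply/hasP/hasP => [[j _ /andP [H1 /eqP H2]]|[j _ /andP [H1 /eqP H2]]];
  exists j; rewrite ?mem_iota ?add0n ?HN ?Hn //; by apply/andP; split=> //; apply/eqP.
Qed.

Lemma a_rule n : 1 <= n -> a n.+1 = a n + step a n.
Proof.
case: n => [//|q] _.
rewrite /step; change (q.+1.-1) with q.
set u := a q; set v := a q.+1.
have hv : v = q.+1 - b u by rewrite /v hofa_S.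
have hw : a q.+2 = q.+2 - b v by rewrite hofa_S.
have bu : b u <= u := hofb_le u.
have uq : u <= q.+1 := hofa_le q.
have bv : b v <= v := hofb_le v.
have vq : v <= q.+2 by have := hofa_le q.+1.
have hinc := a_inc q; rewrite -/u -/v in hinc.
have u1 : 1 <= u := a_ge1 q.
case: (eqVneq v u) => [E|NE].
  rewrite orTb hw E; lia.
rewrite orFb; move/eqP: NE => NE.
have vu : v = u.+1 by lia.
have v2 : 2 <= v by lia.
have hf := b_flat v v2.
rewrite (has_range a q.+1 v) in hf; first last.
- move=> j Hj; rewrite ltnNge; apply/negP => /a_mono; rewrite Hj; lia.
- move=> j Hj; lia.
rewrite -/v -hf.
have hb := b_inc u; rewrite -vu in hb.
rewrite (_ : v.-1 = u); last by lia.
case: (eqVneq (b v) (b u)) => [F|F] /=.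
  rewrite hw F; lia.
rewrite hw; lia.
Qed.

Lemma mod_small2 y n : 0 < n -> 0 < y <= n + n -> (y %% n == 0) = (y == n) || (y == n + n).
Proof.
move=> n0 /andP [y0 yn].
case: (ltnP y n) => [lt|ge].
  by rewrite modn_small //; lia.
have -> : y = n + (y - n) by lia.
rewrite modnDl.
case: (ltnP (y - n) n) => [lt|ge2].
  rewrite modn_small //; lia.
have -> : y - n = n by lia.
by rewrite modnn !eqxx orbT.
Qed.

Lemma modkey n B x : 0 < B -> B < n -> x <= B + n ->
  (((n.-1) * B + x) %% n == 0) = (x == B) || (x == B + n).
Proof.
move=> B0 Bn xB.
have -> : n.-1 * B + x = (B.-1) * n + (n - B + x) by nia.
rewrite modnMDl mod_small2; [|lia|lia].
apply/orP/orP; case=> /eqP H; lia.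
Qed.

Lemma head_filter (P : pred nat) s N x : s <= x < s + N -> P x ->
  (forall y, s <= y < x -> ~~ P y) -> head 0 [seq y <- iota s N | P y] = x.
Proof.
elim: N s => [|N IH] s; first by lia.
move=> Hx Px Hy /=.
case: (eqVneq s x) => [->|ne]; first by rewrite Px.
have Ps : ~~ P s by apply: Hy; lia.
rewrite (negbTE Ps); apply: IH => //; first by lia.
move=> y Hy2; apply: Hy; lia.
Qed.

Lemma quet_S k : quet_upto k.+2 = rcons (quet_upto k.+1) (quet_next k.+1 (quet_upto k.+1)).
Proof. by []. Qed.

Lemma quet_size n : size (quet_upto n) = n.+1.
Proof. by case: n => [|[|n]] //; elim: n => [|n IH] //; rewrite quet_S size_rcons IH. Qed.

Lemma quet_prefix n i : i <= n -> nth 0 (quet_upto n) i = quetA i.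
Proof.
elim: n => [|n IH]; first by rewrite leqn0 => /eqP ->.
rewrite leq_eqVlt => /orP [/eqP ->|Hi]; first by [].
case: n IH Hi => [|n] IH Hi; first by move: Hi; rewrite ltnS leqn0 => /eqP ->.
by rewrite quet_S nth_rcons quet_size Hi IH.
Qed.

Lemma quetA_S n : 1 <= n -> quetA n.+1 = quet_next n (quet_upto n).
Proof.
case: n => [//|n] _.
by rewrite /quetA quet_S nth_rcons quet_size ltnn eqxx.
Qed.

Lemma quet_map n : quet_upto n = [seq quetA i | i <- iota 0 n.+1].
Proof.
apply: (@eq_from_nth _ 0); first by rewrite size_map size_iota quet_size.
move=> i; rewrite quet_size => Hi.
by rewrite (nth_map 0) ?size_iota // nth_iota // add0n quet_prefix.
Qed.

Lemma quetB_sum n : 2 <= n -> quetB n = sumn (quet_upto n) %/ (n - 1).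
Proof.
move=> n2; rewrite /quetB ltnNge n2 /=.
by rewrite quet_map sumnE big_map /index_iota subn0.
Qed.

Lemma quet3 : quet_upto 3 = [:: 0; 1; 2; 3].
Proof. by vm_compute. Qed.
Lemma quetB2 : quetB 2 = 3.
Proof. by rewrite quetB_sum //; vm_compute. Qed.
Lemma quetB3 : quetB 3 = 3.
Proof. by rewrite quetB_sum // quet3. Qed.

Notation Bq := quetB.
Definition J n x := has (fun k => (3 <= k) && (Bq k.+1 == (Bq k).+1) && (x == Bq k + k)) (iota 0 n).

Definition Inv n := [/\ sumn (quet_upto n) = n.-1 * Bq n, 3 <= Bq n, Bq n < n,
  (forall k, 2 <= k < n -> Bq k <= Bq k.+1 <= (Bq k).+1) &
  forall x, (x \in quet_upto n) = [|| x < Bq n, (x == Bq n) && (Bq n == Bq n.-1) | J n x] ].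

Lemma quet5 : quet_upto 5 = [:: 0; 1; 2; 3; 6; 4].
Proof. by vm_compute. Qed.
Lemma quetB4 : quetB 4 = 4.
Proof. by rewrite quetB_sum //; vm_compute. Qed.
Lemma quetB5 : quetB 5 = 4.
Proof. by rewrite quetB_sum // quet5. Qed.

Lemma Inv5 : Inv 5.
Proof.
split; rewrite ?quet5 ?quetB5 //.
- move=> k /andP [k2 k3].
  have : (k = 2) \/ (k = 3) \/ (k = 4) by lia.
  by case=> [->|[->|->]]; rewrite ?quetB2 ?quetB3 ?quetB4 ?quetB5.
- move=> x; rewrite /= quetB4 /J /= quetB3 quetB4 quetB5.
  by case: x => [|[|[|[|[|[|[|x]]]]]]].
Qed.

Lemma mono_rng n : (forall k, 2 <= k < n -> Bq k <= Bq k.+1 <= (Bq k).+1) ->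
  forall k, 2 <= k <= n -> Bq k <= Bq n.
Proof.
elim: n => [|n IH] H k Hk; first by lia.
case: (eqVneq k n.+1) => [->//|ne].
apply: (@leq_trans (Bq n)).
  apply: IH; last by lia.
  move=> j Hj; apply: H; lia.
have /andP [] := H n (ltac:(lia)); done.
Qed.

Lemma quet_S' n : 1 <= n -> quet_upto n.+1 = rcons (quet_upto n) (quetA n.+1).
Proof. case: n => [//|k] _; by rewrite quet_S quetA_S. Qed.

Lemma J_S n x : J n.+1 x = J n x || ((3 <= n) && (Bq n.+1 == (Bq n).+1) && (x == Bq n + n)).
Proof.
have E : iota 0 n.+1 = iota 0 n ++ [:: n] by rewrite -addn1 iotaD.
by rewrite /J E has_cat /= orbF.
Qed.

Lemma Inv_step n : 5 <= n -> Inv n -> Inv n.+1 /\ Bq n.+1 = Bq n + (Bq n \in quet_upto n).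
Proof.
move=> n5 [HS HB3 HBn Hinc HU].
set s := quet_upto n in HS HU *. set B := Bq n in HS HB3 HBn HU *.
have Hs1 : quet_upto n.+1 = rcons s (quetA n.+1) by rewrite quet_S' //; lia.
have HA : quetA n.+1 = head 0 [seq x <- iota 0 (n.+2 * n.+2) |
           (x \notin s) && ((sumn s + x) %% n == 0)] by rewrite quetA_S //; lia.
have HBs : Bq n.+1 = sumn (quet_upto n.+1) %/ n.
  rewrite quetB_sum ?subn1 //; lia.
have Hmod : forall x, x <= B + n -> ((sumn s + x) %% n == 0) = (x == B) || (x == B + n).
  by move=> x Hx; rewrite HS modkey //; lia.
have Hmono : forall k, 2 <= k <= n -> Bq k <= B by move=> k Hk; apply: (@mono_rng n Hinc).
have Hnot : B + n \notin s.
  rewrite HU; apply/negP => /orP [|/orP [|]].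
  - lia.
  - move=> /andP [/eqP H _]; lia.
  - move=> /hasP [k]; rewrite mem_iota add0n => /andP [_ kn] /andP [/andP [k3 _] /eqP E].
    have := Hmono k (ltac:(lia)); lia.
have [Aeq HBn1] : quetA n.+1 = B + (B \in s) * n /\ Bq n.+1 = B + (B \in s).
  case: (boolP (B \in s)) => Bin.
  - have HA' : quetA n.+1 = B + n.
      rewrite HA; apply: head_filter.
      + by apply/andP; split; [|nia].
      + by rewrite Hnot Hmod // eqxx orbT.
      + move=> y /andP [_ Hy]; case: (eqVneq y B) => [->|ne]; first by rewrite Bin.
        rewrite Hmod; last by lia.
        by rewrite (negbTE ne) /=; apply/negP => /andP [_ /eqP]; lia.
    split; first by rewrite HA' mul1n.
    rewrite HBs Hs1 sumn_rcons HS HA'.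
    have -> : n.-1 * B + (B + n) = n * (B + 1) by nia.
    by rewrite mulKn; lia.
  - have HA' : quetA n.+1 = B.
      rewrite HA; apply: head_filter.
      + by apply/andP; split; [|nia].
      + by rewrite Bin Hmod ?eqxx //; lia.
      + move=> y /andP [_ Hy]; rewrite Hmod; last by lia.
        by apply/negP => /andP [_ /orP [] /eqP]; lia.
    split; first by rewrite HA' mul0n addn0.
    rewrite HBs Hs1 sumn_rcons HS HA'.
    have -> : n.-1 * B + B = n * B by nia.
    by rewrite mulKn; lia.
split=> //; split.
- rewrite Hs1 sumn_rcons HS Aeq HBn1 /=; case: (B \in s) => /=; nia.
- rewrite HBn1; lia.
- rewrite HBn1; case: (B \in s) => /=; lia.
- move=> k /andP [k2 kn]; case: (eqVneq k n) => [->|ne]; first by rewrite HBn1 -/B; case: (B \in s) => /=; lia.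
  apply: Hinc; lia.
- move=> x; rewrite Hs1 mem_rcons in_cons J_S HU Aeq HBn1 /= -/B.
  have Bin := HU B; rewrite ltnn eqxx /= in Bin.
  case: (eqVneq x B) => [->|ne]; move: Bin; case: (B \in s) => /=; case: (B == Bq n.-1) => /=; case: (J n x) => /=;
    case: (J n B) => /=; rewrite ?orbT //;
    try move=> _; apply/idP/idP => H; lia.
Qed.

Lemma Inv_all n : 5 <= n -> Inv n.
Proof.
elim: n => [//|n IH]; rewrite leq_eqVlt => /orP [/eqP <-|]; first exact: Inv5.
move=> n5; exact: (@Inv_step n n5 (IH n5)).1.
Qed.

Lemma B_rule n : 5 <= n -> Bq n.+1 = Bq n + ((Bq n == Bq n.-1) || J n (Bq n)).
Proof.
move=> n5; have [_ ->] := @Inv_step n n5 (Inv_all n n5).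
by have [_ _ _ _ ->] := Inv_all n n5; rewrite ltnn eqxx.
Qed.

Lemma B_ge2 k : 2 <= k -> 2 <= Bq k.
Proof.
move=> k2; case: (leqP 5 k) => [k5|lt].
  by have [_ H _ _ _] := Inv_all k k5; lia.
have : (k = 2) \/ (k = 3) \/ (k = 4) by lia.
by case=> [->|[->|->]]; rewrite ?quetB2 ?quetB3 ?quetB4.
Qed.

Definition c m := Bq m.+2 - 2.

Lemma cE m : Bq m.+2 = c m + 2.
Proof. by rewrite /c; have := B_ge2 m.+2 isT; lia. Qed.

Lemma c_rule m : 3 <= m -> c m.+1 = c m + step c m.
Proof.
move=> m3.
have m5 : 5 <= m.+2 by lia.
have H := B_rule m.+2 m5.
rewrite /step.
have E1 : (Bq m.+2 == Bq m.+2.-1) = (c m == c m.-1).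
  have e : Bq m.+2.-1 = c m.-1 + 2 by rewrite -cE prednK //; lia.
  by rewrite e cE eqn_add2r.
have E2 : J m.+2 (Bq m.+2) =
   has (fun j => (c j.+1 == (c j).+1) && (c m == c j + j + 2)) (iota 0 m).
  rewrite /J (_ : iota 0 m.+2 = 0 :: 1 :: [seq 2 + j | j <- iota 0 m]); last first.
    by rewrite /= -iotaDl.
  rewrite /= has_map; apply: eq_in_has => j; rewrite mem_iota add0n => /andP [_ jm].
  rewrite /= add2n.
  case: j jm => [|j] jm.
    by rewrite /c quetB2 quetB3.
  rewrite !cE.
  apply/idP/idP => Hb; lia.
move: H; rewrite E1 E2 (cE m) (cE m.+1) => H; lia.
Qed.

Lemma c_eq_a m : c m = hof_a m.
Proof.
apply: (@rule_uniq c hof_a 3).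
- move=> i Hi.
  have : (i = 0) \/ (i = 1) \/ (i = 2) \/ (i = 3) by lia.
  by case=> [->|[->|[->|->]]]; rewrite /c ?quetB2 ?quetB3 ?quetB4 ?quetB5.
- exact: c_rule.
- move=> n n3; apply: a_rule; lia.
Qed.

Theorem theorem10 : forall n : nat, 2 <= n -> quetB n = hof_a (n - 2) + 2.
Proof.
move=> n n2; rewrite -c_eq_a /c.
have -> : (n - 2).+2 = n by lia.
have := B_ge2 n n2; lia.
Qed.
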